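(* Let $a,b,d<0$ and $c\ge c^+$, and let $\{W_n(z)\}_{n\ge0}$ be the normalised sequence defined below. Then $W_3(z)$ has exactly one negative zero. If moreover $W_3(z)$ has a positive real zero lying outside the interval $(x_g^-,x_g^+)$, then: $a>-1$; the quadratic $F(z)=A(z)^2+B(z)$ has a unique positive zero $x_0$; $W_3(z)$ has two zeros lying in the interval $\big(-b/(a+1),\,x_0\big)$; and \[ x_0<x_\Delta^+,\qquad c<\frac{b}{a+1}+\frac{a+1}{b}\,d,\qquad c^-<0 . \]
   Context: Let $a,b,c,d\in\mathbb{R}$ with $ac\ne0$, and put $A(z)=az+b$, $B(z)=cz+d$. The normalised sequence $\{W_n(z)\}_{n\ge0}$ is defined by $W_0(z)=1$, $W_1(z)=z$ and $W_n(z)=A(z)W_{n-1}(z)+B(z)W_{n-2}(z)$ for $n\ge2$. Notation: $\Delta_\Delta=-a^2d+abc+c^2$, $x_\Delta^+=\dfrac{-ab-2c+2\sqrt{\Delta_\Delta}}{a^2}$ (the larger zero of $A(z)^2+4B(z)$); $\Delta_g=(b+c)^2+4d(1-a)$, $x_g^\pm=\dfrac{b+c\pm\sqrt{\Delta_g}}{2(1-a)}$ (zeros of $g(z)=(1-a)z^2-(b+c)z-d$); $c^\pm=\pm2\sqrt{d(a-1)}-b$. *)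

(* Defs.v *)
From Stdlib Require Import Reals Lra.
Open Scope R_scope.

Definition Apol (a b z : R) : R := a * z + b.
Definition Bpol (c d z : R) : R := c * z + d.

(* Normalised sequence: W_0 = 1, W_1 = z, W_n = A W_{n-1} + B W_{n-2}. *)
Fixpoint Wpair (a b c d z : R) (n : nat) : R * R :=
  match n with
  | O => (1, z)
  | S k => let p := Wpair a b c d z k in
           (snd p, Apol a b z * snd p + Bpol c d z * fst p)
  end.
Definition W (a b c d : R) (n : nat) (z : R) : R := fst (Wpair a b c d z n).

Definition Fpol (a b c d z : R) : R := (Apol a b z) ^ 2 + Bpol c d z.

Definition Delta_Delta (a b c d : R) : R := - a ^ 2 * d + a * b * c + c ^ 2.
Definition x_Delta_plus (a b c d : R) : R :=
  (- a * b - 2 * c + 2 * sqrt (Delta_Delta a b c d)) / a ^ 2.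

Definition Delta_g (a b c d : R) : R := (b + c) ^ 2 + 4 * d * (1 - a).
Definition x_g_plus (a b c d : R) : R :=
  (b + c + sqrt (Delta_g a b c d)) / (2 * (1 - a)).
Definition x_g_minus (a b c d : R) : R :=
  (b + c - sqrt (Delta_g a b c d)) / (2 * (1 - a)).

Definition c_plus (a b d : R) : R := 2 * sqrt (d * (a - 1)) - b.
Definition c_minus (a b d : R) : R := - 2 * sqrt (d * (a - 1)) - b.

(* Main.v *)
Require Import Defs.
From Stdlib Require Import Reals.
From Stdlib Require Import Lra Psatz Ranalysis.
Open Scope R_scope.

Definition Wc (a b c d z : R) : R :=
  a^2*z^3 + (2*a*b+a*c+c)*z^2 + (a*d+b*b+b*c+d)*z + b*d.

Lemma W3E a b c d z : W a b c d 3 z = Wc a b c d z.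
Proof. unfold W, Wpair, Apol, Bpol, Wc; simpl; ring. Qed.

Lemma FE a b c d z : Fpol a b c d z = a^2*z^2 + (2*a*b+c)*z + (b^2+d).
Proof. unfold Fpol, Apol, Bpol; ring. Qed.

Lemma neg_root_ex a b c d : a <> 0 -> b*d > 0 -> exists x, x < 0 /\ Wc a b c d x = 0.
Proof.
  intros ha hbd.
  set (P := 2*a*b+a*c+c). set (Q := a*d+b*b+b*c+d). set (R0 := b*d).
  set (K := Rabs P + Rabs Q + Rabs R0).
  assert (ha2 : a^2 > 0) by (assert (a*a>0) by nra; simpl; lra).
  set (M := 1 + K / a^2).
  assert (hK : K >= 0) by (unfold K; pose proof (Rabs_pos P); pose proof (Rabs_pos Q);
                                         pose proof (Rabs_pos R0); lra).
  assert (hKa : K / a^2 >= 0).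
  { unfold Rdiv. apply Rle_ge, Rmult_le_pos; [lra| apply Rlt_le, Rinv_0_lt_compat; lra]. }
  assert (hM : M >= 1) by (unfold M; lra).
  assert (haM : a^2 * M = a^2 + K) by (unfold M; field; lra).
  assert (hfM : Wc a b c d (-M) < 0).
  { unfold Wc. fold P Q R0.
    assert (h1 : P * M^2 <= Rabs P * M^2) by (apply Rmult_le_compat_r; [nra| apply Rle_abs]).
    assert (h2 : - Q * M <= Rabs Q * M^2).
    { pose proof (Rle_abs (-Q)) as hq. rewrite Rabs_Ropp in hq. pose proof (Rabs_pos Q).
      assert (-Q*M <= Rabs Q * M) by (apply Rmult_le_compat_r; lra).
      assert (Rabs Q * M <= Rabs Q * M^2).
      { replace (Rabs Q * M^2) with ((Rabs Q * M) * M) by ring.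
        assert (0 <= Rabs Q * M) by (apply Rmult_le_pos; lra). nra. }
      lra. }
    assert (hM2 : M^2 >= 1) by nra.
    assert (h3 : R0 <= Rabs R0 * M^2) by (pose proof (Rle_abs R0); pose proof (Rabs_pos R0); nra).
    assert (e : a ^ 2 * (- M) ^ 3 + P * (- M) ^ 2 + Q * - M + R0 =
                - M^2 * (a^2 * M) + P * M^2 - Q * M + R0) by ring.
    rewrite e, haM. unfold K in *. nra. }
  destruct (IVT (Wc a b c d) (-M) 0) as [z [hz1 hz2]].
  - unfold Wc. apply derivable_continuous. reg.
  - lra.
  - exact hfM.
  - unfold Wc. replace (a ^ 2 * 0 ^ 3 + (2 * a * b + a * c + c) * 0 ^ 2 +
     (a * d + b * b + b * c + d) * 0 + b * d) with (b*d) by ring. lra.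
  - exists z. split; [|exact hz2].
    destruct hz1 as [_ hz]. destruct (Req_dec z 0) as [e|e]; [|lra].
    subst z. unfold Wc in hz2. exfalso. ring_simplify in hz2. lra.
Qed.

Lemma mono a b c d r x : a + 1 <= 0 -> b + c > 0 -> a < 0 -> d < 0 -> r < x -> x < 0 ->
  Wc a b c d r = 0 -> Wc a b c d x = 0 -> False.
Proof.
  intros ha1 hbc ha hd hrx hx0 hr hx.
  set (g := fun z => (1-a)*z^2 - (b+c)*z - d).
  set (h := fun z => (a+1)*z + b).
  assert (hW : forall z, Wc a b c d z = z^3 - h z * g z) by (intro; unfold Wc, g, h; ring).
  rewrite hW in hr, hx.
  assert (hg : forall z, z < 0 -> g z > 0).
  { intros z hz. unfold g. assert ((1-a)*z^2 >= 0) by (simpl; nra). nra. }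
  pose proof (hg r ltac:(lra)). pose proof (hg x hx0).
  set (K := (1-a)*r^2*x^2 - (b+c)*r*x*(x+r) - d*(x^2+x*r+r^2)).
  assert (hK : x^3 * g r - r^3 * g x = (x - r) * K) by (unfold K, g; ring).
  assert (hK2 : x^3 * g r - r^3 * g x = g r * g x * (a+1) * (x - r)).
  { replace (x^3) with (h x * g x) by lra. replace (r^3) with (h r * g r) by lra.
    unfold h; ring. }
  assert (hKp : K > 0).
  { unfold K.
    assert (0 < r*x) by nra.
    assert (0 < (1-a)*(r*x)^2) by (assert (0 < (r*x)^2) by (simpl; nra); nra).
    assert (0 <= -(b+c)*(r*x)*(x+r)) by (assert (0 < (b+c)*(r*x)) by nra; nra).
    assert (0 < x^2+x*r+r^2) by (simpl; nra).
    assert (0 < -d*(x^2+x*r+r^2)) by nra.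
    replace ((1-a)*r^2*x^2) with ((1-a)*(r*x)^2) by ring. nra. }
  assert (0 <= g r * g x * -(a+1)) by (apply Rmult_le_pos; [apply Rmult_le_pos|]; lra).
  nra.
Qed.

Theorem theorem4p3 (a b c d : R)
  (ha : a < 0) (hb : b < 0) (hd : d < 0) (hc : c >= c_plus a b d) :
  (exists! x : R, x < 0 /\ W a b c d 3 x = 0) /\
  ((exists y : R, 0 < y /\ W a b c d 3 y = 0 /\
                  ~ (x_g_minus a b c d < y < x_g_plus a b c d)) ->
   a > -1 /\
   (exists x0 : R,
      (0 < x0 /\ Fpol a b c d x0 = 0 /\
       (forall y, 0 < y -> Fpol a b c d y = 0 -> y = x0)) /\
      (exists x1 x2 r : R,
         (forall z, W a b c d 3 z = a ^ 2 * (z - r) * (z - x1) * (z - x2)) /\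
         - b / (a + 1) < x1 < x0 /\ - b / (a + 1) < x2 < x0) /\
      x0 < x_Delta_plus a b c d) /\
   c < b / (a + 1) + (a + 1) / b * d /\
   c_minus a b d < 0).
Proof.
  unfold c_plus in hc.
  set (s := sqrt (d * (a - 1))) in *.
  assert (hda : d * (a - 1) > 0) by nra.
  assert (hs0 : 0 <= s) by apply sqrt_pos.
  assert (hs2 : s * s = d * (a - 1)) by (apply sqrt_sqrt; lra).
  assert (hsp : 0 < s) by (apply sqrt_lt_R0; lra).
  assert (hcpos : c > 0) by lra.
  assert (hbc : b + c >= 2 * s) by lra.
  assert (ha2 : a^2 > 0) by (simpl; nra).
  assert (ha0 : a <> 0) by lra.
  set (P := 2*a*b+a*c+c). set (Q := a*d+b*b+b*c+d).
  assert (hWc : forall z, Wc a b c d z = a^2*z^3 + P*z^2 + Q*z + b*d) by (intro; reflexivity).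
  assert (fact : forall r y, r <> y -> Wc a b c d r = 0 -> Wc a b c d y = 0 ->
     forall z, Wc a b c d z = a^2 * (z - r) * (z - y) * (z - (-P/a^2 - r - y))).
  { intros r y hry hr hy z.
    set (E := a^2*(r^2+r*y+y^2) + P*(r+y) + Q).
    assert (hE : (r - y) * E = 0).
    { replace ((r - y) * E) with (Wc a b c d r - Wc a b c d y) by (rewrite !hWc; unfold E; ring).
      lra. }
    assert (hE0 : E = 0).
    { destruct (Rmult_integral _ _ hE) as [h|h]; [lra|exact h]. }
    assert (id : Wc a b c d z - a^2 * (z - r) * (z - y) * (z - (-P/a^2 - r - y))
                 = E * (z - r) + Wc a b c d r).
    { rewrite !hWc. unfold E. field. lra. }
    rewrite hE0, hr in id. lra. }
  destruct (neg_root_ex a b c d ha0 ltac:(nra)) as [r [hr0 hr]].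
  split.
  { exists r. split; [split; [exact hr0| rewrite W3E; exact hr]|].
    intros x' [hx0 hx]. rewrite W3E in hx.
    destruct (Req_dec r x') as [e|hne]; [exact e|exfalso].
    pose proof (fact r x' hne hr hx) as hf.
    set (t := -P/a^2 - r - x') in *.
    assert (hP : P = - a^2 * (r + x' + t)) by (unfold t; field; lra).
    pose proof (hf 0) as h0. rewrite hWc in h0.
    assert (ht : t < 0).
    { assert (hrx : r * x' > 0) by nra.
      assert (e : b * d = - a^2 * (r * x') * t) by (ring_simplify in h0; ring_simplify; lra).
      destruct (Rle_or_lt 0 t) as [h|h]; [|exact h].
      assert (0 <= a^2 * (r*x') * t) by (apply Rmult_le_pos; [nra|lra]). nra. }
    destruct (Rle_or_lt (a+1) 0) as [ha1|ha1].
    { destruct (Rlt_or_le r x') as [hl|hl].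
      - exact (mono a b c d r x' ha1 ltac:(lra) ha hd hl hx0 hr hx).
      - exact (mono a b c d x' r ha1 ltac:(lra) ha hd ltac:(lra) hr0 hx hr). }
    pose proof (hf 1) as h1. pose proof (hf (-1)) as hm1.
    rewrite hWc in h1, hm1.
    assert (hQ : Q = a^2*(r*x' + r*t + x'*t)).
    { assert (e : Q * 2 = a^2 * (1 - r) * (1 - x') * (1 - t) - a^2 * (-1 - r) * (-1 - x') * (-1 - t) - 2*a^2)
        by (ring_simplify in h1; ring_simplify in hm1; ring_simplify; lra).
      assert (e2 : Q * 2 = 2 * (a^2*(r*x' + r*t + x'*t))) by (rewrite e; ring). lra. }
    assert (Q > 0) by (rewrite hQ; assert (r*x'+r*t+x'*t > 0) by nra; nra).
    unfold Q in *. assert (b*(b+c) <= 0) by nra. nra. }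
  intros [y [hy0 [hy hyout]]].
  rewrite W3E in hy.
  set (A := fun z => a*z+b). set (B := fun z => c*z+d).
  set (g := fun z => (1-a)*z^2 - (b+c)*z - d).
  set (h := fun z => (a+1)*z + b).
  set (F := fun z => a^2*z^2 + (2*a*b+c)*z + (b^2+d)).
  assert (hWg : forall z, Wc a b c d z = z^3 - h z * g z) by (intro; unfold Wc, g, h; ring).
  assert (hFh : forall z, F z * h z = A z ^ 3 + Wc a b c d z) by (intro; unfold F, h, A, Wc; ring).
  assert (hFE : forall z, Fpol a b c d z = F z) by (intro; rewrite FE; reflexivity).
  assert (hDg : Delta_g a b c d >= 0).
  { unfold Delta_g. assert ((b+c)^2 >= 4*(s*s)) by (simpl; nra). nra. }
  set (sg := sqrt (Delta_g a b c d)) in *.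
  assert (hsg0 : 0 <= sg) by apply sqrt_pos.
  assert (hsg2 : sg * sg = Delta_g a b c d) by (apply sqrt_sqrt; lra).
  assert (hgy : g y >= 0).
  { unfold x_g_minus, x_g_plus in hyout. fold sg in hyout.
    assert (e : g y = (1-a) * (y - (b + c - sg) / (2 * (1 - a))) * (y - (b + c + sg) / (2 * (1 - a)))).
    { assert (e0 : (1-a) * (y - (b + c - sg) / (2 * (1 - a))) * (y - (b + c + sg) / (2 * (1 - a)))
         = (1-a)*y^2 - (b+c)*y + ((b+c)^2 - sg*sg)/(4*(1-a))) by (field; lra).
      rewrite e0, hsg2. unfold g, Delta_g. field. lra. }
    rewrite e.
    assert (hmp : (b + c - sg) / (2 * (1 - a)) <= (b + c + sg) / (2 * (1 - a))).
    { unfold Rdiv. apply Rmult_le_compat_r; [|lra]. apply Rlt_le, Rinv_0_lt_compat; lra. }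
    destruct (Rle_or_lt y ((b + c - sg) / (2 * (1 - a)))) as [h1|h1].
    - assert (0 <= (1-a) * ((b + c - sg) / (2 * (1 - a)) - y)) by (apply Rmult_le_pos; lra).
      nra.
    - assert (h2 : (b + c + sg) / (2 * (1 - a)) <= y) by (apply Rnot_lt_le; intro; apply hyout; lra).
      assert (0 <= (1-a) * (y - (b + c - sg) / (2 * (1 - a)))) by (apply Rmult_le_pos; lra).
      nra. }
  assert (hhg : h y * g y = y^3) by (rewrite hWg in hy; lra).
  assert (hy3 : y^3 > 0) by (apply pow_lt; lra).
  assert (hhy : h y > 0).
  { destruct (Rle_or_lt (h y) 0) as [e|e]; [|exact e].
    assert (0 <= -(h y) * g y) by (apply Rmult_le_pos; lra). nra. }
  assert (ha1 : a + 1 > 0).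
  { unfold h in hhy. destruct (Rle_or_lt (a+1) 0) as [e|e]; [|exact e].
    assert (0 <= -(a+1) * y) by (apply Rmult_le_pos; lra). nra. }
  assert (hAneg : forall z, 0 < z -> A z < 0) by (intros z hz; unfold A; nra).
  assert (hFy : F y < 0).
  { pose proof (hFh y) as e. rewrite hy, Rplus_0_r in e.
    pose proof (hAneg y hy0).
    assert (A y ^ 3 < 0) by (simpl; assert (A y * A y > 0) by nra; nra).
    destruct (Rle_or_lt 0 (F y)) as [e2|e2]; [|exact e2].
    assert (0 <= F y * h y) by (apply Rmult_le_pos; lra). lra. }
  assert (hF0 : b^2 + d < 0).
  { destruct (Rle_or_lt 0 (b^2+d)) as [e|e]; [|exact e].
    exfalso. unfold F in hFy. assert (a*b > 0) by nra. assert (a^2*y^2 >= 0) by (simpl; nra). nra. }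
  (* convexity *)
  assert (hconv : forall z, 0 <= z <= y -> F z < 0).
  { intros z [hz1 hz2].
    assert (e : y * F z = (y - z) * (b^2+d) + z * F y + a^2 * y * z * (z - y)) by (unfold F; ring).
    assert ((y - z) * (b^2+d) <= 0) by nra.
    assert (z * F y <= 0) by nra.
    assert (a^2 * y * z * (z - y) <= 0).
    { assert (0 <= a^2 * y * z) by (apply Rmult_le_pos; [apply Rmult_le_pos|]; lra). nra. }
    destruct (Rle_or_lt 0 (F z)) as [e2|e2]; [|exact e2].
    destruct (Req_dec z 0) as [ez|ez].
    - subst z. unfold F in e2. simpl in e2. lra.
    - assert (0 < z) by lra. assert (z * F y < 0) by nra. nra. }
  set (u := - b / (a+1)).
  assert (hu0 : 0 < u) by (unfold u, Rdiv; apply Rmult_lt_0_compat; [lra|apply Rinv_0_lt_compat; lra]).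
  assert (huy : u < y).
  { unfold u. apply (Rmult_lt_reg_r (a+1)); [lra|]. unfold h in hhy.
    replace (- b / (a + 1) * (a + 1)) with (-b) by (field; lra). lra. }
  assert (hhu : forall z, h z > 0 <-> z > u).
  { intro z. unfold h, u. split; intro e.
    - apply (Rmult_lt_reg_r (a+1)); [lra|]. replace (- b / (a + 1) * (a + 1)) with (-b) by (field; lra). lra.
    - apply (Rmult_lt_compat_r (a+1)) in e; [|lra]. replace (- b / (a + 1) * (a + 1)) with (-b) in e by (field; lra). lra. }
  assert (hFu : F u < 0) by (apply hconv; lra).
  set (D := (2*a*b+c)^2 - 4*a^2*(b^2+d)).
  assert (hD : D > (2*a*b+c)^2) by (unfold D; assert (a^2*(b^2+d) < 0) by nra; lra).
  set (sD := sqrt D).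
  assert (hsD0 : 0 <= sD) by apply sqrt_pos.
  assert (0 <= (2*a*b+c)^2) by (rewrite <- Rsqr_pow2; apply Rle_0_sqr).
  assert (hsD2 : sD * sD = D) by (apply sqrt_sqrt; lra).
  assert (hsDgt : sD > Rabs (2*a*b+c)).
  { pose proof (Rabs_pos (2*a*b+c)). 
    assert (Rabs (2*a*b+c) * Rabs (2*a*b+c) = (2*a*b+c)^2) by (rewrite <- Rabs_mult; simpl; rewrite Rmult_1_r; apply Rabs_right; nra).
    nra. }
  pose proof (Rle_abs (2*a*b+c)) as hab1. pose proof (Rle_abs (-(2*a*b+c))) as hab2.
  rewrite Rabs_Ropp in hab2.
  set (x0 := (-(2*a*b+c) + sD) / (2*a^2)).
  set (x' := (-(2*a*b+c) - sD) / (2*a^2)).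
  assert (hFfac : forall z, F z = a^2 * (z - x0) * (z - x')).
  { intro z. 
    assert (e0 : a^2 * (z - x0) * (z - x') = a^2*z^2 + (2*a*b+c)*z + ((2*a*b+c)^2 - sD*sD)/(4*a^2))
      by (unfold x0, x'; field; lra).
    rewrite e0, hsD2. unfold F, D. field. lra. }
  assert (hx0p : 0 < x0).
  { unfold x0, Rdiv. apply Rmult_lt_0_compat; [lra|apply Rinv_0_lt_compat; lra]. }
  assert (hx'n : x' < 0).
  { unfold x', Rdiv. assert (0 < / (2*a^2)) by (apply Rinv_0_lt_compat; lra). nra. }
  assert (hFx0 : F x0 = 0) by (rewrite hFfac; ring).
  assert (hlt0 : forall z, 0 < z -> F z < 0 -> z < x0).
  { intros z hz hFz. rewrite hFfac in hFz.
    destruct (Rlt_or_le z x0) as [e|e]; [exact e|].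
    assert (0 <= a^2 * (z - x0) * (z - x')) by (apply Rmult_le_pos; [apply Rmult_le_pos|]; lra). lra. }
  split; [lra|].
  split.
  - exists x0. split; [|split].
    + split; [exact hx0p|]. split; [rewrite hFE; exact hFx0|].
      intros z hz hFz. rewrite hFE, hFfac in hFz.
      assert (e : a^2 * (z - x0) * (z - x') = (a^2 * (z - x')) * (z - x0)) by ring.
      rewrite e in hFz. destruct (Rmult_integral _ _ hFz) as [e1|e1]; [|lra].
      assert (a^2 * (z - x') > 0) by (apply Rmult_lt_0_compat; lra). lra.
    + assert (hry : r <> y) by lra.
      pose proof (fact r y hry hr hy) as hf.
      set (t := -P/a^2 - r - y) in *.
      exists y, t, r. split; [intro z; rewrite W3E, hf; ring|].
      assert (ht0 : 0 < t).
      { pose proof (hf 0) as e. rewrite hWc in e. 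
        assert (e2 : b * d = - a^2 * (r * y) * t) by (ring_simplify in e; ring_simplify; lra).
        assert (r * y < 0) by nra.
        destruct (Rlt_or_le 0 t) as [e3|e3]; [exact e3|].
        assert (0 <= a^2 * (-(r*y)) * (-t)) by (apply Rmult_le_pos; [apply Rmult_le_pos|]; lra).
        nra. }
      assert (hWt : Wc a b c d t = 0) by (rewrite hf; ring).
      assert (hyx0 : y < x0) by (apply hlt0; lra).
      split; [fold u; lra|].
      fold u.
      pose proof (hFh t) as e. rewrite hWt, Rplus_0_r in e.
      pose proof (hAneg t ht0).
      assert (A t ^ 3 < 0) by (simpl; assert (A t * A t > 0) by nra; nra).
      destruct (Rlt_or_le 0 (h t)) as [e1|e1].
      * assert (F t < 0).
        { destruct (Rle_or_lt 0 (F t)) as [e2|e2]; [|exact e2].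
          assert (0 <= F t * h t) by (apply Rmult_le_pos; lra). lra. }
        split; [apply hhu; lra| apply hlt0; lra].
      * exfalso. assert (t <= u) by (destruct (Rle_or_lt t u); [assumption|]; 
           assert (h t > 0) by (apply hhu; lra); lra).
        assert (F t < 0) by (apply hconv; lra).
        assert (0 <= F t * h t) by nra. lra.
    +
      assert (hB : B x0 < 0).
      { assert (e : F x0 = A x0 ^ 2 + B x0) by (unfold F, A, B; ring).
        pose proof (hAneg x0 hx0p). assert (A x0 ^2 > 0) by (simpl; nra). lra. }
      assert (hsq : (a^2*x0 + a*b + 2*c)^2 < 4 * Delta_Delta a b c d).
      { unfold Delta_Delta. unfold B in hB.
        assert (e : (a^2*x0 + a*b + 2*c)^2 - 4 * (- a ^ 2 * d + a * b * c + c ^ 2) = a^2 * (F x0 + 3 * (c*x0+d))) by (unfold F; ring).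
        assert (a^2 * (F x0 + 3 * (c*x0+d)) < 0) by (rewrite hFx0; nra). lra. }
      assert (hDD : Delta_Delta a b c d > 0) by (assert (0 <= (a^2*x0 + a*b + 2*c)^2) by (rewrite <- Rsqr_pow2; apply Rle_0_sqr); lra).
      set (sd := sqrt (Delta_Delta a b c d)).
      assert (0 <= sd) by apply sqrt_pos.
      assert (sd * sd = Delta_Delta a b c d) by (apply sqrt_sqrt; lra).
      assert (hlt : a^2*x0 + a*b + 2*c < 2 * sd).
      { destruct (Rlt_or_le (a^2*x0 + a*b + 2*c) (2*sd)) as [e|e]; [exact e|]. simpl in hsq. nra. }
      unfold x_Delta_plus. fold sd.
      apply (Rmult_lt_reg_r (a^2)); [lra|].
      replace ((- a * b - 2 * c + 2 * sd) / a ^ 2 * a ^ 2) with (- a * b - 2 * c + 2 * sd) by (field; lra).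
      lra.
  - split.
    +
      assert (hFu' : F u = u^2 + c*u + d) by (unfold F, u; field; lra).
      assert (e : u * (b / (a + 1) + (a + 1) / b * d) = - u^2 - d) by (unfold u; field; lra).
      apply (Rmult_lt_reg_l u); [lra|]. rewrite e. nra.
    + unfold c_minus. fold s.
      assert (4*(s*s) > b^2) by (rewrite hs2; nra). nra.
Qed.
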